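(* For integers $p\ge1$ and $0\le k\le n$, and all $x$, \[ \sum_{j=0}^{n-k}\binom{n-k}{j}B_{j+k}^{(p)}(x)=\sum_{j=0}^{k}\binom{k}{j}(-1)^{j}\Big\{B_{n-j}^{(p)}(x)+(n-j)B_{n-j-1}^{(p-1)}(x)\Big\}, \] where the term $(n-j)B^{(p-1)}_{n-j-1}(x)$ is taken to be $0$ when $n-j=0$.
   Context: For $p\ge1$, $B_n^{(p)}(x)$ denotes the higher-order Bernoulli polynomial with all parameters equal to $1$: $\sum_{n\ge0}B_n^{(p)}(x)\frac{t^n}{n!}=e^{xt}\left(\frac{t}{e^t-1}\right)^p$; in particular $B_n^{(0)}(x)=x^n$. *)

(* Defs.v *)
From HB Require Import structures.
From mathcomp Require Import all_boot all_order all_algebra.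
Set Implicit Arguments. Unset Strict Implicit. Unset Printing Implicit Defensive.
Import Order.TTheory GRing.Theory Num.Theory.
Local Open Scope ring_scope.

(* Bernoulli numbers B_0, ..., B_n defined by t/(e^t-1) = sum B_k t^k/k!,
   i.e. by the coefficient recursion  sum_{k=0}^{m} C(m+1,k) B_k = [m = 0]:
   B_0 = 1,  B_m = -1/(m+1) * sum_{k<m} C(m+1,k) B_k  (m >= 1). *)
Fixpoint bern_seq (R : numFieldType) (n : nat) : seq R :=
  match n with
  | 0 => [:: 1]
  | n'.+1 =>
      let s := bern_seq R n' in
      rcons s (- (n'.+2%:R)^-1 * \sum_(k < n'.+1) 'C(n'.+2, k)%:R * s`_k)
  end.

Definition bern (R : numFieldType) (n : nat) : R := (bern_seq R n)`_n.

(* Higher-order Bernoulli polynomials B_n^{(p)}(x), all parameters 1: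
   sum_n B_n^{(p)}(x) t^n/n! = e^{xt} (t/(e^t-1))^p.
   B_n^{(0)}(x) = x^n and, since the EGF of order p+1 is the product of the
   EGF of order p with t/(e^t-1), the Cauchy product of exponential series gives
   B_n^{(p+1)}(x) = sum_k C(n,k) B_k B_{n-k}^{(p)}(x). *)
Fixpoint hbern (R : numFieldType) (p n : nat) (x : R) : R :=
  match p with
  | 0 => x ^+ n
  | p'.+1 => \sum_(k < n.+1) 'C(n, k)%:R * bern R k * hbern p' (n - k) x
  end.

(* Main.v *)
Require Import Defs.
From HB Require Import structures.
From mathcomp Require Import all_boot all_order all_algebra.
From mathcomp Require Import ring.
Import Order.TTheory GRing.Theory Num.Theory.
Set Implicit Arguments. Unset Strict Implicit. Unset Printing Implicit Defensive.
Local Open Scope ring_scope.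

Definition conv (R : numFieldType) (u v : nat -> R) m :=
  \sum_(k < m.+1) 'C(m, k)%:R * u k * v (m - k)%N.
Definition egf (R : numFieldType) (u : nat -> R) N : {poly R} :=
  \poly_(i < N) (u i / (i`!)%:R).

Lemma fact_neq0 (R : numFieldType) j : (j`!)%:R != 0 :> R.
Proof. by rewrite pnatr_eq0 -lt0n fact_gt0. Qed.

Lemma conv_coef (R : numFieldType) (u v : nat -> R) N m : (m < N)%N ->
  conv u v m = (m`!)%:R * (egf u N * egf v N)`_m.
Proof.
move=> hm; rewrite coefM mulr_sumr /conv; apply: eq_bigr => [[j /=]].
rewrite ltnS => hj _.
rewrite !coef_poly (leq_ltn_trans hj hm) (leq_ltn_trans (leq_subr j m) hm).
rewrite -(bin_fact hj) !natrM.
have h1 := fact_neq0 R j; have h2 := fact_neq0 R (m - j).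
field. by rewrite h1 h2.
Qed.

Lemma coefM_eq (R : numFieldType) (p p' q : {poly R}) m :
  (forall j, (j <= m)%N -> p`_j = p'`_j) -> (p * q)`_m = (p' * q)`_m.
Proof.
move=> h; rewrite !coefM; apply: eq_bigr => [[j /=]]; rewrite ltnS => hj _.
by rewrite h.
Qed.

Lemma egf_conv (R : numFieldType) (u v : nat -> R) N j : (j < N)%N ->
  (egf (conv u v) N)`_j = (egf u N * egf v N)`_j.
Proof.
move=> hj; rewrite coef_poly hj (conv_coef _ _ hj) mulrC mulrA mulVf ?mul1r //.
exact: fact_neq0.
Qed.

Lemma conv_comm (R : numFieldType) (u v : nat -> R) m : conv u v m = conv v u m.
Proof. by rewrite !(conv_coef _ _ (ltnSn m)) [egf u _ * _]mulrC. Qed.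

Lemma conv_assoc (R : numFieldType) (u v w : nat -> R) m :
  conv (conv u v) w m = conv u (conv v w) m.
Proof.
rewrite !(conv_coef _ _ (ltnSn m)); congr (_ * _).
rewrite (@coefM_eq _ _ (egf u m.+1 * egf v m.+1)); last first.
  by move=> j hj; rewrite egf_conv // ltnS.
rewrite [egf u m.+1 * egf (conv v w) m.+1]mulrC [RHS](@coefM_eq _ _ (egf v m.+1 * egf w m.+1)); last first.
  by move=> j hj; rewrite egf_conv // ltnS.
by rewrite [in RHS]mulrC mulrA.
Qed.

Lemma bern_seq_size (R : numFieldType) n : size (bern_seq R n) = n.+1.
Proof. by elim: n => //= n IH; rewrite size_rcons IH. Qed.

Lemma bern_seq_nth (R : numFieldType) n k : (k <= n)%N -> (bern_seq R n)`_k = bern R k.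
Proof.
elim: n k => [|n IH] k hk.
  by rewrite leqn0 in hk; move/eqP: hk => ->.
rewrite leq_eqVlt in hk; case/orP: hk => [/eqP->|hk]; first by [].
by rewrite /= nth_rcons bern_seq_size hk IH.
Qed.

Lemma bern_rec (R : numFieldType) n : bern R n.+1 =
  - (n.+2%:R)^-1 * \sum_(k < n.+1) 'C(n.+2, k)%:R * bern R k.
Proof.
rewrite {1}/bern /= nth_rcons bern_seq_size ltnn eqxx; congr (_ * _).
by apply: eq_bigr => [[i /=]] hi _; rewrite bern_seq_nth // -ltnS.
Qed.

Lemma bern_sum (R : numFieldType) n :
  \sum_(k < n.+1) 'C(n.+1, k)%:R * bern R k = (n == 0%N)%:R.
Proof.
case: n => [|n]; first by rewrite big_ord1 bin0 mul1r eqxx.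
rewrite big_ord_recr /= binSn bern_rec mulrA mulrN mulfV ?pnatr_eq0 //.
by rewrite mulN1r addrN.
Qed.

Lemma conv_bern_one (R : numFieldType) m :
  conv (bern R) (fun _ => 1) m = bern R m + (m == 1%N)%:R.
Proof.
rewrite /conv; case: m => [|m]; first by rewrite big_ord1 bin0 mul1r mulr1 addr0.
rewrite big_ord_recr /=.
under eq_bigr do rewrite mulr1.
by rewrite bern_sum binn mul1r mulr1 eqSS addrC.
Qed.

Lemma sum_bin_eq1 (R : numFieldType) (F : nat -> R) m :
  \sum_(k < m.+1) 'C(m, k)%:R * (k == 1%N :> nat)%:R * F (m - k)%N = m%:R * F m.-1.
Proof.
case: m => [|m]; first by rewrite big_ord1 /= !mulr0 !mul0r.
rewrite big_ord_recl /= mulr0 mul0r add0r big_ord_recl /= big1 ?addr0.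
  by rewrite bin1 mulr1 subn1.
by move=> i _; rewrite /bump /= mulr0 mul0r.
Qed.

Lemma shift (R : numFieldType) (q m : nat) (x : R) :
  \sum_(i < m.+1) 'C(m, i)%:R * hbern q.+1 i x =
  hbern q.+1 m x + m%:R * hbern q m.-1 x.
Proof.
set H := fun i => hbern q i x.
have -> : \sum_(i < m.+1) 'C(m, i)%:R * hbern q.+1 i x =
   conv (conv (bern R) H) (fun _ => 1) m.
  by rewrite {2}/conv; apply: eq_bigr => i _; rewrite mulr1.
rewrite conv_comm -conv_assoc {1}/conv.
under eq_bigr do rewrite conv_comm conv_bern_one mulrDr mulrDl.
rewrite big_split /= sum_bin_eq1.
by [].
Qed.

Lemma coefXadd1 (R : numFieldType) m i : ((('X : {poly R}) + 1) ^+ m)`_i = 'C(m, i)%:R.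
Proof.
rewrite addrC exprDn coef_sum.
rewrite (eq_bigr (fun j : 'I_m.+1 => if j == i :> nat then 'C(m, j)%:R else 0)).
  rewrite -big_mkcond (big_ord1_eq _ (fun j => 'C(m, j)%:R)); case: ifP => // /negbT; rewrite -leqNgt => hi.
  by rewrite bin_small.
move=> j _; rewrite coefMn expr1n mul1r coefXn.
by rewrite eq_sym; case: eqP => _; rewrite ?mul0rn.
Qed.

Definition Lf (R : numFieldType) (H : nat -> R) n (P : {poly R}) :=
  \sum_(i < n.+1) P`_i * H i.

Lemma LA (R : numFieldType) (H : nat -> R) n m : (m <= n)%N ->
  \sum_(i < m.+1) 'C(m, i)%:R * H i = Lf H n ((('X : {poly R}) + 1) ^+ m).
Proof.
move=> hm; rewrite /Lf; under [RHS]eq_bigr do rewrite coefXadd1.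
rewrite (big_ord_widen _ (fun i => 'C(m, i)%:R * H i) (hm : (m.+1 <= n.+1)%N)).
rewrite big_mkcond; apply: eq_bigr => i _; case: ifP => // /negbT.
by rewrite -leqNgt => hi; rewrite bin_small // mul0r.
Qed.

Lemma LB (R : numFieldType) (H : nat -> R) n k : (k <= n)%N ->
  \sum_(j < (n - k).+1) 'C(n - k, j)%:R * H (j + k)%N =
  Lf H n ((('X : {poly R}) + 1) ^+ (n - k) * 'X^k).
Proof.
move=> hk; rewrite /Lf; under [RHS]eq_bigr do rewrite coefMXn coefXadd1.
rewrite -(big_mkord xpredT (fun i => (if (i < k)%N then 0 else 'C(n - k, i - k)%:R) * H i)).
rewrite (big_cat_nat (leq0n k) (leqW hk)) /=.
rewrite [in RHS]big1_seq ?add0r; last first.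
  by move=> i; rewrite mem_index_iota => /andP[_ /andP[_ ->]]; rewrite mul0r.
rewrite -[in RHS](add0n k) big_addn !add0n subSn // big_mkord.
by apply: eq_bigr => i _; rewrite ltnNge leq_addl /= addnK.
Qed.

Lemma LC (R : numFieldType) n k : (k <= n)%N ->
  (('X : {poly R}) + 1) ^+ (n - k) * 'X^k =
  \sum_(j < k.+1) ('C(k, j)%:R * (-1) ^+ j) *: (('X : {poly R}) + 1) ^+ (n - j).
Proof.
move=> hk.
have -> : ('X : {poly R}) ^+ k = (('X + 1) + (-1)) ^+ k by rewrite addrK.
rewrite [X in _ * X]exprDn mulr_sumr; apply: eq_bigr => [[j /=]]; rewrite ltnS => hj _.
have e : (n - k + (k - j) = n - j)%N.
  by rewrite addnBA // subnK.
rewrite mulrnAr mulrA -exprD e -scalerA scaler_nat.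
rewrite -mul_polyC rmorphXn rmorphN1 /=.
by rewrite mulrC.
Qed.

Lemma LD (R : numFieldType) (H : nat -> R) n k (c : nat -> R) (P : nat -> {poly R}) :
  Lf H n (\sum_(j < k.+1) c j *: P j) = \sum_(j < k.+1) c j * Lf H n (P j).
Proof.
rewrite /Lf; under eq_bigr do rewrite coef_sum big_distrl.
rewrite exchange_big; apply: eq_bigr => j _; rewrite mulr_sumr.
by apply: eq_bigr => i _; rewrite coefZ mulrA.
Qed.

Theorem mainTheorem9 (R : numFieldType) (p n k : nat) (x : R) :
  (1 <= p)%N -> (k <= n)%N ->
  \sum_(j < (n - k).+1) 'C(n - k, j)%:R * hbern p (j + k) x =
  \sum_(j < k.+1) 'C(k, j)%:R * (-1) ^+ j *
     (hbern p (n - j) x + (n - j)%:R * hbern p.-1 (n - j).-1 x).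
Proof.
case: p => // q _ hkn /=.
under [RHS]eq_bigr do rewrite -shift.
rewrite (LB (fun i => hbern q.+1 i x) hkn) (LC R hkn) (LD _ _ _ (fun j => 'C(k, j)%:R * (-1) ^+ j) (fun j => (('X : {poly R}) + 1) ^+ (n - j))).
apply: eq_bigr => j _; rewrite (@LA _ (fun i => hbern q.+1 i x) n) //.
exact: leq_subr.
Qed.
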